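(* Let $a\neq 0$ be a real constant and let $M$ be the open subset $\{r>0\}$ of $\mathbb{R}^4$ with coordinates $(t,\phi,r,z)$, equipped with the Som-Raychaudhuri metric $$g=(dt+a r^{2}\,d\phi)^{2}-r^{2}\,d\phi^{2}-dr^{2}-dz^{2}.$$ Then $(M,g)$ has the following properties: (i) its Ricci tensor is cyclic parallel; (ii) it is $2$-quasi-Einstein; (iii) it is an $Ein(3)$ manifold; (iv) it is generalized quasi-Einstein both in the sense of Chaki and in the sense of De and Ghosh; (v) it is pseudo quasi-Einstein; (vi) it is special Ricci generalized pseudosymmetric, i.e. $R\cdot R=Q(S,R)$; (vii) it is a manifold of pseudosymmetric Weyl conformal curvature tensor; (viii) it is of generalized Roter type; (ix) its Ricci tensor is Riemann compatible, conformal (Weyl) compatible, concircular compatible and conharmonic compatible.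
   Context: Notation for a semi-Riemannian manifold $(M,g)$ of dimension $n$ (here $n=4$): $\nabla$ is the Levi-Civita connection, $\mathcal R(X,Y)=[\nabla_X,\nabla_Y]-\nabla_{[X,Y]}$, $R(X_1,X_2,X_3,X_4)=g(\mathcal R(X_1,X_2)X_3,X_4)$, $S$ is the Ricci tensor, $\kappa$ the scalar curvature, $\mathcal S$ the Ricci operator ($g(X,\mathcal SY)=S(X,Y)$), $S^2(X,Y)=S(X,\mathcal SY)$, $S^3(X,Y)=S(X,\mathcal S^2Y)$. For a symmetric $(0,2)$-tensor $A$, $(X\wedge_A Y)Z=A(Y,Z)X-A(X,Z)Y$. Weyl conformal operator $\mathcal C(X,Y)=\mathcal R(X,Y)-\frac{1}{n-2}\big(X\wedge_g\mathcal SY+\mathcal SX\wedge_g Y-\frac{\kappa}{n-1}X\wedge_g Y\big)$; concircular operator $\mathcal W(X,Y)=\mathcal R(X,Y)-\frac{\kappa}{n(n-1)}X\wedge_gY$; conharmonic operator $\mathcal K(X,Y)=\mathcal R(X,Y)-\frac{1}{n-2}(X\wedge_g\mathcal SY+\mathcal SX\wedge_gY)$; the $(0,4)$-tensors $C,W,K$ are obtained from these as $R$ from $\mathcal R$. For an endomorphism $\mathcal H$ and a $(0,k)$-tensor $T$, $(\mathcal H\cdot T)(X_1,\dots,X_k)=-\sum_{i}T(X_1,\dots,\mathcal HX_i,\dots,X_k)$; $(R\cdot T)(X_1,\dots,X_k,X,Y)=(\mathcal R(X,Y)\cdot T)(X_1,\dots,X_k)$, similarly $C\cdot T$ with $\mathcal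 C(X,Y)$, and $Q(A,T)(X_1,\dots,X_k,X,Y)=((X\wedge_AY)\cdot T)(X_1,\dots,X_k)$. Kulkarni–Nomizu product: $(A\wedge E)(X_1,X_2,X,Y)=A(X_1,Y)E(X_2,X)+A(X_2,X)E(X_1,Y)-A(X_1,X)E(X_2,Y)-A(X_2,Y)E(X_1,X)$. Definitions: $M$ is $k$-quasi-Einstein if $\mathrm{rank}(S-\alpha g)=k$ for some smooth function $\alpha$ (quasi-Einstein means $k=1$). $M$ is $Ein(3)$ if $S^3+a_3S^2+a_4S+a_5g=0$ for some smooth functions $a_i$. The Ricci tensor is cyclic parallel if $(\nabla_{X_1}S)(X_2,X_3)+(\nabla_{X_2}S)(X_3,X_1)+(\nabla_{X_3}S)(X_1,X_2)=0$. Let $U$ be the set of points where $S-\nu_1g-\nu_2\xi\otimes\xi\neq0$ for all scalars $\nu_1,\nu_2$ and $1$-forms $\xi$. $M$ is generalized quasi-Einstein in the sense of Chaki (resp. De and Ghosh) if on $U$, $S=\alpha g+\beta\Pi\otimes\Pi+\gamma(\Pi\otimes\Phi+\Phi\otimes\Pi)$ (resp. $S=\alpha g+\beta\Pi\otimes\Pi+\gamma\Phi\otimes\Phi$) for smooth functions $\alpha,\beta,\gamma$ and $1$-forms $\Pi,\Phi$ whose associated vector fields are mutually orthogonal. $M$ is pseudo quasi-Einstein if on $U$, $S=\alpha g+\beta\Pi\otimes\Pi+\gamma E$ for smooth functions $\alpha,\beta,\gamma$, a $1$-form $\Pi$ and a trace-free symmetric $(0,2)$-tensor $E$ with $E(X,V)=0$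 for all $X$, $V$ being the vector field associated to $\Pi$. $M$ is a manifold of pseudosymmetric Weyl conformal curvature tensor if $C\cdot C=L\,Q(g,C)$ for some smooth function $L$. $M$ is of generalized Roter type if $R=L_1g\wedge g+L_2g\wedge S+L_3S\wedge S+L_4g\wedge S^2+L_5S\wedge S^2+L_6S^2\wedge S^2$ for some smooth functions $L_j$. A symmetric $(0,2)$-tensor $E$ with endomorphism $\mathcal E$ ($g(\mathcal EX,Y)=E(X,Y)$) is Riemann compatible if $R(\mathcal EX_1,X,X_2,X_3)+R(\mathcal EX_2,X,X_3,X_1)+R(\mathcal EX_3,X,X_1,X_2)=0$ for all vector fields; conformal (Weyl), concircular and conharmonic compatibility are defined identically with $R$ replaced by $C$, $W$, $K$ respectively. *)

(* Defs.v *)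
(* Semi-Riemannian geometry of a metric given in global coordinates on an
   (open) subset of R^4, all tensors written in the coordinate frame
   d/dx_0, ..., d/dx_3. *)
From HB Require Import structures.
From mathcomp Require Import all_boot all_order all_algebra.
From mathcomp Require Import all_classical all_reals all_analysis.
Set Implicit Arguments. Unset Strict Implicit. Unset Printing Implicit Defensive.
Import Order.TTheory GRing.Theory Num.Theory.
Import numFieldNormedType.Exports.
Local Open Scope ring_scope.

Section Geometry.
Variable R : realType.

Definition pt := 'rV[R]_4.
Definition T4 := 'I_4 -> 'I_4 -> 'I_4 -> 'I_4 -> R.

(* the coordinate vector field d/dx_i (also the i-th standard (co)vector) *)
Definition ecoord (i : 'I_4) : 'rV[R]_4 := delta_mx 0 i.

Definition partial (i : 'I_4) (f : pt -> R) : pt -> R :=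
  fun x => 'D_(ecoord i) f x.

Fixpoint ipartial (ds : seq 'I_4) (f : pt -> R) : pt -> R :=
  match ds with
  | [::] => f
  | i :: ds' => partial i (ipartial ds' f)
  end.

Definition smooth_on (U : set pt) (f : pt -> R) : Prop :=
  forall (ds : seq 'I_4) (x : pt), U x ->
    {for x, continuous (ipartial ds f)} /\
    (forall i, derivable (ipartial ds f) x (ecoord i)).

Definition smooth_vec_on (U : set pt) (P : pt -> 'rV[R]_4) : Prop :=
  forall i, smooth_on U (fun x => P x 0 i).

Definition smooth_mx_on (U : set pt) (E : pt -> 'M[R]_4) : Prop :=
  forall i j, smooth_on U (fun x => E x i j).

(* Pointwise tensor algebra.  Convention for endomorphisms H of the     *)
(* tangent space: H c m is the m-th component of H(d/dx_c), so that     *)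
(* H(u) = u *m H for a row vector u of components.                      *)

(* (X /\_A Y) Z = A(Y,Z) X - A(X,Z) Y  as an endomorphism matrix *)
Definition wedgeE (A : 'M[R]_4) (u v : 'rV[R]_4) : 'M[R]_4 :=
  \matrix_(c, m) ((v *m A) 0 c * u 0 m - (u *m A) 0 c * v 0 m).

Definition dotT (H : 'M[R]_4) (T : T4) : T4 :=
  fun i j k l => - \sum_(m < 4)
    (H i m * T m j k l + H j m * T i m k l + H k m * T i j m l + H l m * T i j k m).

Definition KN (A E : 'M[R]_4) : T4 :=
  fun i j a b => A i b * E j a + A j a * E i b - A i a * E j b - A j b * E i a.

Definition compatible (T : T4) (Emx : 'M[R]_4) : Prop :=
  forall i a j k : 'I_4,
    \sum_(p < 4) (Emx i p * T p a j k + Emx j p * T p a k i + Emx k p * T p a i j) = 0.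

Variable G : pt -> 'M[R]_4.

Definition ginv (x : pt) : 'M[R]_4 := invmx (G x).

Definition dg (k i j : 'I_4) (x : pt) : R := partial k (fun y => G y i j) x.

(* Christoffel symbols Gamma^k_ij : nabla_{d_i} d_j = sum_k Gamma^k_ij d_k *)
Definition Gam (x : pt) (k i j : 'I_4) : R :=
  2^-1 * \sum_(l < 4) ginv x k l * (dg i j l x + dg j i l x - dg l i j x).

(* curvature operator  R(d_a, d_b) = [nabla_a, nabla_b] (coordinate fields
   commute), as an endomorphism matrix *)
Definition Rop (x : pt) (a b : 'I_4) : 'M[R]_4 :=
  \matrix_(c, p)
    (partial a (fun y => Gam y p b c) x - partial b (fun y => Gam y p a c) x
     + \sum_(m < 4) (Gam x m b c * Gam x p a m - Gam x m a c * Gam x p b m)).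

(* lowering the last index: T(X1,X2,X3,X4) = g(H(X1,X2)X3, X4) *)
Definition lower (x : pt) (H : 'I_4 -> 'I_4 -> 'M[R]_4) : T4 :=
  fun i j k l => \sum_(m < 4) H i j k m * G x m l.

Definition Rt (x : pt) : T4 := lower x (Rop x).

(* Ricci tensor S(X,Y) = tr (Z |-> R(Z,X)Y) *)
Definition Ric (x : pt) : 'M[R]_4 := \matrix_(b, c) \sum_(a < 4) Rop x a b c a.

(* Ricci operator: g(X, S Y) = S(X,Y) *)
Definition Sop (x : pt) : 'M[R]_4 := (ginv x *m Ric x)^T.

Definition kappa (x : pt) : R := \tr (ginv x *m Ric x).

Definition Ric2 (x : pt) : 'M[R]_4 := Ric x *m ginv x *m Ric x.
Definition Ric3 (x : pt) : 'M[R]_4 := Ric x *m ginv x *m Ric x *m ginv x *m Ric x.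

Definition nablaS (x : pt) (i j k : 'I_4) : R :=
  partial i (fun y => Ric y j k) x
  - \sum_(m < 4) (Gam x m i j * Ric x m k + Gam x m i k * Ric x j m).

(* 1-forms / vectors as row vectors of components *)
Definition sharp (x : pt) (u : 'rV[R]_4) : 'rV[R]_4 := u *m (ginv x)^T.
Definition gprod (x : pt) (u v : 'rV[R]_4) : R := (u *m G x *m v^T) 0 0.

Definition nR : R := 4%:R.

Definition Cop (x : pt) (a b : 'I_4) : 'M[R]_4 :=
  Rop x a b - (nR - 2)^-1 *:
    (wedgeE (G x) (ecoord a) (ecoord b *m Sop x)
     + wedgeE (G x) (ecoord a *m Sop x) (ecoord b)
     - (kappa x / (nR - 1)) *: wedgeE (G x) (ecoord a) (ecoord b)).

Definition Wop (x : pt) (a b : 'I_4) : 'M[R]_4 :=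
  Rop x a b - (kappa x / (nR * (nR - 1))) *: wedgeE (G x) (ecoord a) (ecoord b).

Definition Kop (x : pt) (a b : 'I_4) : 'M[R]_4 :=
  Rop x a b - (nR - 2)^-1 *:
    (wedgeE (G x) (ecoord a) (ecoord b *m Sop x)
     + wedgeE (G x) (ecoord a *m Sop x) (ecoord b)).

Definition Ct (x : pt) : T4 := lower x (Cop x).
Definition Wt (x : pt) : T4 := lower x (Wop x).
Definition Kt (x : pt) : T4 := lower x (Kop x).

Variable M : set pt.

Definition Ricci_cyclic_parallel : Prop :=
  forall x, M x -> forall i j k,
    nablaS x i j k + nablaS x j k i + nablaS x k i j = 0.

Definition k_quasi_Einstein (k : nat) : Prop :=
  exists alpha : pt -> R,
    smooth_on M alpha /\ (forall x, M x -> \rank (Ric x - alpha x *: G x)%R = k).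

Definition Ein3 : Prop :=
  exists a3 a4 a5 : pt -> R,
    [/\ smooth_on M a3, smooth_on M a4, smooth_on M a5 &
      forall x, M x ->
        Ric3 x + a3 x *: Ric2 x + a4 x *: Ric x + a5 x *: G x = 0].

Definition Uset : set pt :=
  [set x | M x /\ forall (nu1 nu2 : R) (xi : 'rV[R]_4),
             Ric x != nu1 *: G x + nu2 *: (xi^T *m xi)].

Definition tens (P Q : 'rV[R]_4) : 'M[R]_4 := P^T *m Q.

Definition gen_quasi_Einstein_Chaki : Prop :=
  exists (alpha beta gamma : pt -> R) (Pi Phi : pt -> 'rV[R]_4),
    [/\ smooth_on Uset alpha, smooth_on Uset beta, smooth_on Uset gamma,
        smooth_vec_on Uset Pi /\ smooth_vec_on Uset Phi &
      forall x, Uset x ->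
        (gprod x (sharp x (Pi x)) (sharp x (Phi x)) = 0) /\
        (Ric x = alpha x *: G x + beta x *: tens (Pi x) (Pi x)
                 + gamma x *: (tens (Pi x) (Phi x) + tens (Phi x) (Pi x)))].

Definition gen_quasi_Einstein_DeGhosh : Prop :=
  exists (alpha beta gamma : pt -> R) (Pi Phi : pt -> 'rV[R]_4),
    [/\ smooth_on Uset alpha, smooth_on Uset beta, smooth_on Uset gamma,
        smooth_vec_on Uset Pi /\ smooth_vec_on Uset Phi &
      forall x, Uset x ->
        (gprod x (sharp x (Pi x)) (sharp x (Phi x)) = 0) /\
        (Ric x = alpha x *: G x + beta x *: tens (Pi x) (Pi x)
                 + gamma x *: tens (Phi x) (Phi x))].

Definition pseudo_quasi_Einstein : Prop :=
  exists (alpha beta gamma : pt -> R) (Pi : pt -> 'rV[R]_4) (E : pt -> 'M[R]_4),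
    [/\ smooth_on Uset alpha, smooth_on Uset beta, smooth_on Uset gamma,
        smooth_vec_on Uset Pi /\ smooth_mx_on Uset E &
      forall x, Uset x ->
        [/\ (E x)^T = E x, \tr (ginv x *m E x) = 0,
            E x *m (sharp x (Pi x))^T = 0 &
            Ric x = alpha x *: G x + beta x *: tens (Pi x) (Pi x)
                    + gamma x *: E x]].

Definition special_Ricci_gen_pseudosymmetric : Prop :=
  forall x, M x -> forall i j k l a b : 'I_4,
    dotT (Rop x a b) (Rt x) i j k l
    = dotT (wedgeE (Ric x) (ecoord a) (ecoord b)) (Rt x) i j k l.

Definition Weyl_pseudosymmetric : Prop :=
  exists L : pt -> R, smooth_on M L /\
    forall x, M x -> forall i j k l a b : 'I_4,
      dotT (Cop x a b) (Ct x) i j k l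
      = L x * dotT (wedgeE (G x) (ecoord a) (ecoord b)) (Ct x) i j k l.

Definition gen_Roter_type : Prop :=
  exists L1 L2 L3 L4 L5 L6 : pt -> R,
    [/\ [/\ smooth_on M L1, smooth_on M L2 & smooth_on M L3],
        [/\ smooth_on M L4, smooth_on M L5 & smooth_on M L6] &
      forall x, M x -> forall i j k l : 'I_4,
        Rt x i j k l =
          L1 x * KN (G x) (G x) i j k l + L2 x * KN (G x) (Ric x) i j k l
          + L3 x * KN (Ric x) (Ric x) i j k l + L4 x * KN (G x) (Ric2 x) i j k l
          + L5 x * KN (Ric x) (Ric2 x) i j k l + L6 x * KN (Ric2 x) (Ric2 x) i j k l].

Definition Ricci_Riemann_compatible : Prop :=
  forall x, M x -> compatible (Rt x) (Sop x).
Definition Ricci_Weyl_compatible : Prop :=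
  forall x, M x -> compatible (Ct x) (Sop x).
Definition Ricci_concircular_compatible : Prop :=
  forall x, M x -> compatible (Wt x) (Sop x).
Definition Ricci_conharmonic_compatible : Prop :=
  forall x, M x -> compatible (Kt x) (Sop x).

End Geometry.

Definition i_t : 'I_4 := @Ordinal 4 0 isT.
Definition i_phi : 'I_4 := @Ordinal 4 1 isT.
Definition i_r : 'I_4 := @Ordinal 4 2 isT.
Definition i_z : 'I_4 := @Ordinal 4 3 isT.

Definition SR_M (R : realType) : set (pt R) := [set x | 0 < x 0 i_r].

Definition SR_metric (R : realType) (a : R) (x : pt R) : 'M[R]_4 :=
  let r := x 0 i_r in
  let theta := ecoord R i_t + (a * r ^+ 2) *: ecoord R i_phi in
  tens theta theta - r ^+ 2 *: tens (ecoord R i_phi) (ecoord R i_phi)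
  - tens (ecoord R i_r) (ecoord R i_r) - tens (ecoord R i_z) (ecoord R i_z).

(* Main.v *)
Require Import Defs.
From HB Require Import structures.
From mathcomp Require Import all_boot all_order all_algebra.
From mathcomp Require Import all_classical all_reals all_analysis.
From mathcomp Require Import ssrZ ring lra zify.
From Stdlib Require Import BinNums BinInt.
From Stdlib Require QArith Pnat.
Set Implicit Arguments. Unset Strict Implicit. Unset Printing Implicit Defensive.
Import Order.TTheory GRing.Theory Num.Theory.
Import numFieldNormedType.Exports.
Local Open Scope ring_scope.

Notation Q := QArith_base.Q.
Notation Qmake := QArith_base.Qmake.
Notation Qnum := QArith_base.Qnum.
Notation Qden := QArith_base.Qden.
Notation Qplus := QArith_base.Qplus.
Notation Qmult := QArith_base.Qmult.
Notation Qopp := QArith_base.Qopp.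
Notation Qeq := QArith_base.Qeq.
Notation Qeq_bool := QArith_base.Qeq_bool.
Notation Qeq_bool_iff := QArith_base.Qeq_bool_iff.
Notation inject_Z := QArith_base.inject_Z.
Notation Qred := Qreduction.Qred.
Notation Qred_correct := Qreduction.Qred_correct.

Inductive mono := Mo (ea er : Z) (es : bool) (c : Q).
Definition L := list mono.

Definition qadd x y := Qred (Qplus x y).
Definition qmul x y := Qred (Qmult x y).

Definition sameKey (m1 m2 : mono) : bool :=
  let: Mo a1 r1 s1 _ := m1 in let: Mo a2 r2 s2 _ := m2 in
  Z.eqb a1 a2 && Z.eqb r1 r2 && Bool.eqb s1 s2.

Fixpoint addm1 (m : mono) (p : L) : L :=
  match p with
  | nil => m :: nil
  | m' :: p' => if sameKey m m' then
                  (let: Mo a1 r1 s1 c1 := m' in let: Mo _ _ _ c := m in Mo a1 r1 s1 (qadd c c1)) :: p'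
                else m' :: addm1 m p'
  end.

Definition addS (p q : L) : L := foldr addm1 q p.
Definition mulm (m1 m2 : mono) : mono :=
  let: Mo a1 r1 s1 c1 := m1 in let: Mo a2 r2 s2 c2 := m2 in
  Mo (a1 + a2)%Z (r1 + r2)%Z (xorb s1 s2)
     (qmul (Qmult c1 c2) (if s1 && s2 then (Qmake 2 1) else (Qmake 1 1))).
Definition mulS (p q : L) : L := foldr (fun m acc => addS (map (mulm m) q) acc) nil p.
Definition negm (m : mono) : mono := let: Mo a1 r1 s1 c1 := m in Mo a1 r1 s1 (Qopp c1).
Definition negS (p : L) : L := map negm p.
Definition subS (p q : L) : L := addS p (negS q).
Definition cstS (q : Q) : L := Mo 0 0 false q :: nil.
Definition zeroS : L := nil.
Definition oneS : L := cstS (Qmake 1 1).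
Definition monS (ea er : Z) (q : Q) : L := Mo ea er false q :: nil.
Definition s2S : L := Mo 0 0 true (Qmake 1 1) :: nil.
Definition dm (m : mono) : mono :=
  let: Mo a1 r1 s1 c1 := m in Mo a1 (r1 - 1)%Z s1 (qmul c1 (inject_Z r1)).
Definition drS (p : L) : L := addS (map dm p) nil.
Definition iszero (p : L) : bool :=
  all (fun m => let: Mo _ _ _ c := m in Qeq_bool c (Qmake 0 1)) (addS p nil).

Section Eval.
Variable R : realType.
Definition Z2R (z : Z) : R := (int_of_Z z)%:~R.
Definition evQ (q : Q) : R := Z2R (Qnum q) / Z2R (Zpos (Qden q)).
Definition sq2 : R := Num.sqrt 2.
Definition evm (a r : R) (m : mono) : R :=
  let: Mo ea er es c := m in
  evQ c * (a ^ int_of_Z ea * r ^ int_of_Z er) * (if es then sq2 else 1).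
Definition ev (a r : R) (p : L) : R := foldr (fun m acc => evm a r m + acc) 0 p.

Lemma Z2R_add x y : Z2R (x + y)%Z = Z2R x + Z2R y.
Proof. by rewrite /Z2R -intrD -raddfD. Qed.
Lemma Z2R_mul x y : Z2R (x * y)%Z = Z2R x * Z2R y.
Proof. by rewrite /Z2R -intrM -rmorphM. Qed.
Lemma Z2R_opp x : Z2R (- x)%Z = - Z2R x.
Proof. by rewrite /Z2R -intrN -raddfN. Qed.
Lemma Z2R_pos p : Z2R (Zpos p) != 0.
Proof.
rewrite /Z2R /= intr_eq0 /=; apply/negP => /eqP [].
by have := Pos2Nat.is_pos p => /ssrnat.ltP; case: (Pos.to_nat p).
Qed.
Lemma Z2R0 : Z2R 0 = 0. Proof. by rewrite /Z2R. Qed.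
Lemma Z2R1 : Z2R 1 = 1. Proof. by rewrite /Z2R. Qed.

Lemma evQ_plus x y : evQ (Qplus x y) = evQ x + evQ y.
Proof.
case: x y => [xn xd] [yn yd]; rewrite /evQ /Qplus /=.
have hx := Z2R_pos xd; have hy := Z2R_pos yd.
have -> : Z.pos (xd * yd) = (Z.pos xd * Z.pos yd)%Z by [].
rewrite Z2R_add !Z2R_mul; field; by rewrite hx hy.
Qed.
Lemma evQ_mult x y : evQ (Qmult x y) = evQ x * evQ y.
Proof.
case: x y => [xn xd] [yn yd]; rewrite /evQ /Qmult /=.
have hx := Z2R_pos xd; have hy := Z2R_pos yd.
have -> : Z.pos (xd * yd) = (Z.pos xd * Z.pos yd)%Z by [].
rewrite !Z2R_mul; field; by rewrite hx hy.
Qed.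
Lemma evQ_opp x : evQ (Qopp x) = - evQ x.
Proof. case: x => [xn xd]; by rewrite /evQ /= Z2R_opp mulNr. Qed.
Lemma evQ_eq x y : Qeq x y -> evQ x = evQ y.
Proof.
case: x y => [xn xd] [yn yd]; rewrite /Qeq /evQ /= => h.
have hx := Z2R_pos xd; have hy := Z2R_pos yd.
apply/eqP; rewrite eqr_div // -!Z2R_mul h //.
Qed.
Lemma evQ_red x : evQ (Qred x) = evQ x.
Proof. exact/evQ_eq/Qred_correct. Qed.
Lemma evQ_qadd x y : evQ (qadd x y) = evQ x + evQ y.
Proof. by rewrite /qadd evQ_red evQ_plus. Qed.
Lemma evQ_qmul x y : evQ (qmul x y) = evQ x * evQ y.
Proof. by rewrite /qmul evQ_red evQ_mult. Qed.
Lemma evQ0 x : Qeq_bool x (Qmake 0 1) -> evQ x = 0.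
Proof.
move=> /Qeq_bool_iff h; rewrite (evQ_eq h) /evQ /= Z2R0; by rewrite mul0r.
Qed.
Lemma evQ_int (z : Z) : evQ (inject_Z z) = Z2R z.
Proof. by rewrite /evQ /= Z2R1 divr1. Qed.

Variables (a r : R).
Hypotheses (ha : a != 0) (hr : r != 0).

Lemma ev_cons m p : ev a r (m :: p) = evm a r m + ev a r p. Proof. by []. Qed.
Lemma ev_nil : ev a r nil = 0. Proof. by []. Qed.

Lemma ev_addm1 m p : ev a r (addm1 m p) = evm a r m + ev a r p.
Proof.
case: m => a1 r1 s1 c1; elim: p => [|m' p IH] /=; first by [].
case: m' => [a2 r2 s2 c2] /=.
case: ifP => [/andP[/andP[/Z.eqb_spec e1 /Z.eqb_spec e2] /Bool.eqb_prop e3]|_] /=.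
  by subst; rewrite evQ_qadd !mulrDl addrA.
by rewrite IH /= addrCA.
Qed.

Lemma ev_add p q : ev a r (addS p q) = ev a r p + ev a r q.
Proof. elim: p => [|m p IH] /=; first by rewrite add0r. by rewrite ev_addm1 IH addrA. Qed.

Lemma sq2_sq : sq2 * sq2 = 2.
Proof. by rewrite /sq2 -expr2 sqr_sqrtr // ler0n. Qed.

Lemma ev_mulm m1 m2 : evm a r (mulm m1 m2) = evm a r m1 * evm a r m2.
Proof.
case: m1 m2 => [a1 r1 s1 c1] [a2 r2 s2 c2] /=.
rewrite evQ_qmul evQ_mult !raddfD /= !expfzDr //.
have h2 : evQ (Qmake 2 1) = 2 by rewrite /evQ /= /Z2R /= divr1.
have h1 : evQ (Qmake 1 1) = 1 by rewrite /evQ /= /Z2R /= divr1.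
case: s1; case: s2 => /=; rewrite ?h1 ?h2 -?sq2_sq; ring.
Qed.

Lemma ev_map_mulm m q : ev a r (map (mulm m) q) = evm a r m * ev a r q.
Proof. elim: q => [|m' q IH] /=; first by rewrite mulr0. by rewrite ev_mulm IH mulrDr. Qed.

Lemma ev_mul p q : ev a r (mulS p q) = ev a r p * ev a r q.
Proof.
elim: p => [|m p IH] /=; first by rewrite mul0r.
by rewrite ev_add ev_map_mulm IH mulrDl.
Qed.

Lemma ev_neg p : ev a r (negS p) = - ev a r p.
Proof.
elim: p => [|[a1 r1 s1 c1] p IH] /=; first by rewrite oppr0.
by rewrite IH evQ_opp opprD !mulNr.
Qed.
Lemma ev_sub p q : ev a r (subS p q) = ev a r p - ev a r q.
Proof. by rewrite /subS ev_add ev_neg. Qed.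

Lemma ev_cst q : ev a r (cstS q) = evQ q.
Proof. by rewrite /= expr0z expr0z !mulr1 addr0. Qed.
Lemma ev_zero : ev a r zeroS = 0. Proof. by []. Qed.
Lemma ev_one : ev a r oneS = 1.
Proof. by rewrite ev_cst /evQ /= /Z2R /= divr1. Qed.

Lemma iszeroP p : iszero p -> ev a r p = 0.
Proof.
rewrite /iszero => h; rewrite -[ev a r p]addr0 -ev_nil -ev_add.
elim: (addS p nil) h => [|[a1 r1 s1 c1] q IH] //= /andP[h1 h2].
by rewrite IH // evQ0 // !mul0r add0r.
Qed.

Lemma iszero_eq p q : iszero (subS p q) -> ev a r p = ev a r q.
Proof. by move=> /iszeroP; rewrite ev_sub => /eqP; rewrite subr_eq0 => /eqP. Qed.
End Eval.


Section Deriv.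
Variable R : realType.

Lemma is_derive_exprz (n : int) (x : R) : x != 0 ->
  is_derive x 1 (fun r : R => r ^ n) (n%:~R * x ^ (n - 1)).
Proof.
move=> hx; case: n => k.
- have -> : (fun r : R => r ^ Posz k) = (@GRing.exp R ^~ k) by [].
  apply: DeriveDef; first exact: exprn_derivable.
  rewrite exp_derive [_%:A]mulr1; case: k => [|k].
    by rewrite scale0r mul0r.
  have -> : (Posz k.+1 - 1 = Posz k)%R by rewrite -addn1 PoszD addrK.
  by [].
- have -> : (fun r : R => r ^ Negz k) = (fun r => (@GRing.exp R ^~ k.+1 r)^-1) by [].
  apply: DeriveDef; first by apply: derivableV; [rewrite expf_neq0|exact: exprn_derivable].
  rewrite deriveV ?expf_neq0 //; last exact: exprn_derivable.
  rewrite -derive1E exp_derive1 [_ *: _]/(_ * _).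
  have -> : (Negz k - 1 = Negz k.+1)%R by rewrite !NegzE; lia.
  have hk : x ^+ k != 0 by rewrite expf_neq0.
  change (- ((x ^+ k.+1) ^+ 2)^-1 * ((k.+1)%:R * x ^+ k) = - ((k.+1)%:R) * (x ^+ k.+2)^-1).
  rewrite !exprS; field; by rewrite hx hk.
Qed.

Lemma derive_coord (F : R -> R) (x v : pt R) (j : 'I_4) :
  'D_v (fun y : pt R => F (y 0 j)) x = 'D_(v 0 j) F (x 0 j).
Proof.
rewrite /derive.
suff -> : (fun h : R => h^-1 *: (((fun y : pt R => F (y 0 j)) \o shift x) (h *: v) - F (x 0 j)))
  = (fun h : R => h^-1 *: ((F \o shift (x 0 j)) (h *: v 0 j) - F (x 0 j))) by [].
by apply/funext => h /=; rewrite !mxE.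
Qed.

Lemma derivable_coord (F : R -> R) (x v : pt R) (j : 'I_4) :
  derivable (fun y : pt R => F (y 0 j)) x v <-> derivable F (x 0 j) (v 0 j).
Proof.
rewrite /derivable.
suff -> : (fun h : R => h^-1 *: (((fun y : pt R => F (y 0 j)) \o shift x) (h *: v) - F (x 0 j)))
  = (fun h : R => h^-1 *: ((F \o shift (x 0 j)) (h *: v 0 j) - F (x 0 j))) by [].
by apply/funext => h /=; rewrite !mxE.
Qed.

Lemma ev_drS_cons (a x : R) m p : ev a x (drS (m :: p)) = evm a x (dm m) + ev a x (drS p).
Proof. by rewrite /drS !ev_add /= !addr0. Qed.

Lemma is_derive_ev (a : R) p (x : R) : x != 0 ->
  is_derive x 1 (fun r => ev a r p) (ev a x (drS p)).
Proof.
move=> hx; elim: p => [|m p IH].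
  have -> : (fun r : R => ev a r nil) = cst 0 by [].
  exact: is_derive_cst.
have -> : (fun r : R => ev a r (m :: p)) = (fun r => evm a r m) + (fun r => ev a r p) by [].
rewrite ev_drS_cons; apply: is_deriveD => //.
case: m => ea er es c.
set K := @evQ R c * a ^ int_of_Z ea * (if es then sq2 R else 1).
have -> : (fun r => evm a r (Mo ea er es c)) = K *: (fun r : R => r ^ int_of_Z er).
  apply/funext => r; transitivity (K * r ^ int_of_Z er); last by [].
  by rewrite /K /=; ring.
apply: (is_derive_eq (is_deriveZ K (is_derive_exprz (int_of_Z er) hx))).
rewrite /= evQ_qmul evQ_int /Z2R.
have -> : int_of_Z (er - 1)%Z = int_of_Z er - 1.
  by rewrite (_ : (er - 1)%Z = (er - 1)%R) // raddfB.
transitivity (K * ((int_of_Z er)%:~R * x ^ (int_of_Z er - 1))); first by [].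
rewrite /K; ring.
Qed.

Lemma near_r (x : pt R) : x 0 i_r != 0 -> \forall y \near x, (y : pt R) 0 i_r != 0.
Proof.
move=> hx.
have hc := @coord_continuous R 1 4 0 i_r x.
have hn : nbhs (x 0 i_r) [set c : R | c != 0]%classic.
  by apply: open_nbhs_nbhs; split => //; exact: open_neq.
exact: hc _ hn.
Qed.

Lemma ecoord_r (i : 'I_4) : ecoord R i 0 i_r = (i_r == i)%:R.
Proof. by rewrite /ecoord mxE eqxx. Qed.

Lemma partial_ev (a : R) (f : pt R -> R) p (y : pt R) : y 0 i_r != 0 ->
  (forall z : pt R, z 0 i_r != 0 -> f z = ev a (z 0 i_r) p) ->
  forall i, partial i f y = ev a (y 0 i_r) (if i == i_r then drS p else zeroS)
            /\ derivable f y (ecoord R i).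
Proof.
move=> hy hf i.
have hn : \forall z \near y, (fun z : pt R => ev a (z 0 i_r) p) z = f z.
  by apply: filterS (near_r hy) => z hz; rewrite hf.
have hd := is_derive_ev a p hy.
split.
  rewrite /partial -(near_eq_derive _ hn) (derive_coord (fun r => ev a r p)) ecoord_r.
  rewrite eq_sym; case: ifP => _ /=.
    by rewrite derive_val.
  by rewrite derive0.
apply: (near_eq_derivable hn); apply/(derivable_coord (fun r => ev a r p)); rewrite ecoord_r.
case: (i_r == i) => /=; last exact: derivable0.
exact: ex_derive.
Qed.

Lemma ipartial_ev (a : R) (f : pt R -> R) p :
  (forall z : pt R, z 0 i_r != 0 -> f z = ev a (z 0 i_r) p) ->
  forall ds, exists q, forall z : pt R, z 0 i_r != 0 -> ipartial ds f z = ev a (z 0 i_r) q.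
Proof.
move=> hf; elim => [|i ds [q IH]]; first by exists p.
exists (if i == i_r then drS q else zeroS) => z hz /=.
by case: (partial_ev hz IH i).
Qed.

Lemma cont_ev (a : R) q (x : pt R) : x 0 i_r != 0 ->
  {for x, continuous (fun z : pt R => ev a (z 0 i_r) q)}.
Proof.
move=> hx.
have hd := is_derive_ev a q hx.
have hF : {for x 0 i_r, continuous (fun r => ev a r q)}.
  apply: differentiable_continuous; apply/derivable1_diffP; exact: ex_derive.
exact: (continuous_comp (@coord_continuous R 1 4 0 i_r x) hF).
Qed.

Lemma smooth_ev (a : R) (f : pt R -> R) p :
  (forall z : pt R, z 0 i_r != 0 -> f z = ev a (z 0 i_r) p) -> smooth_on (@SR_M R) f.
Proof.
move=> hf ds x hx.
have hx0 : x 0 i_r != 0 by rewrite gt_eqF // ?hx.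
have [q hq] := ipartial_ev hf ds.
split; last by move=> i; case: (partial_ev hx0 hq i).
have hn : \forall z \near x, (fun z : pt R => ev a (z 0 i_r) q) z = ipartial ds f z.
  by apply: filterS (near_r hx0) => z hz; rewrite hq.
have hc := @cont_ev a q x hx0.
rewrite /prop_for /continuous_at (hq _ hx0).
exact: (cvg_trans (near_eq_cvg hn) hc).
Qed.
End Deriv.


Definition ords : seq 'I_4 := [:: i_t; i_phi; i_r; i_z].
Definition MS := 'I_4 -> 'I_4 -> L.
Definition VS := 'I_4 -> L.
Definition TS := 'I_4 -> 'I_4 -> 'I_4 -> 'I_4 -> L.

Definition sum4 (F : 'I_4 -> L) : L := addS (F i_t) (addS (F i_phi) (addS (F i_r) (F i_z))).
Definition allI (f : 'I_4 -> bool) : bool := [&& f i_t, f i_phi, f i_r & f i_z].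

Definition mulMS (A B : MS) : MS := fun i j => sum4 (fun k => mulS (A i k) (B k j)).
Definition vmulS (u : VS) (A : MS) : VS := fun j => sum4 (fun k => mulS (u k) (A k j)).
Definition trMS (A : MS) : MS := fun i j => A j i.
Definition addMS (A B : MS) : MS := fun i j => addS (A i j) (B i j).
Definition subMS (A B : MS) : MS := fun i j => subS (A i j) (B i j).
Definition sclMS (c : L) (A : MS) : MS := fun i j => mulS c (A i j).
Definition addVS (u v : VS) : VS := fun i => addS (u i) (v i).
Definition sclVS (c : L) (u : VS) : VS := fun i => mulS c (u i).
Definition eS (i : 'I_4) : VS := fun j => if j == i then oneS else zeroS.
Definition wedgeS (A : MS) (u v : VS) : MS :=
  fun c m => subS (mulS (vmulS v A c) (u m)) (mulS (vmulS u A c) (v m)).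
Definition tensS (P Q : VS) : MS := fun i j => mulS (P i) (Q j).
Definition dotS (H : MS) (T : TS) : TS := fun i j k l =>
  negS (sum4 (fun m => addS (addS (addS (mulS (H i m) (T m j k l)) (mulS (H j m) (T i m k l)))
                   (mulS (H k m) (T i j m l))) (mulS (H l m) (T i j k m)))).
Definition KNS (A E : MS) : TS := fun i j a b =>
  subS (subS (addS (mulS (A i b) (E j a)) (mulS (A j a) (E i b))) (mulS (A i a) (E j b)))
       (mulS (A j b) (E i a)).
Definition lowerS (G : MS) (H : TS) : TS := fun i j k l => sum4 (fun m => mulS (H i j k m) (G m l)).
Definition compatS (T : TS) (E : MS) : TS := fun i a j k =>
  sum4 (fun p => addS (addS (mulS (E i p) (T p a j k)) (mulS (E j p) (T p a k i))) (mulS (E k p) (T p a i j))).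
Definition trS (A : MS) : L := sum4 (fun i => A i i).
Definition dpart (i : 'I_4) (q : L) : L := if i == i_r then drS q else zeroS.

Definition cleanS (p : L) : L :=
  seq.filter (fun m => let: Mo _ _ _ c := m in ~~ QArith_base.Qeq_bool c (Qmake 0 1)) (addS p nil).
Definition tab2 (f : MS) := map (fun i => map (fun j => cleanS (f i j)) ords) ords.
Definition get2 T (i j : 'I_4) : L := nth nil (nth nil T i) j.
Definition tab3 (f : 'I_4 -> MS) := map (fun i => tab2 (f i)) ords.
Definition get3 T (i j k : 'I_4) : L := nth nil (nth nil (nth nil T i) j) k.
Definition tab4 (f : TS) := map (fun i => tab3 (f i)) ords.
Definition get4 T (i j k l : 'I_4) : L := nth nil (nth nil (nth nil (nth nil T i) j) k) l.

Definition q1 : QArith_base.Q := Qmake 1 1.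
Definition qh : QArith_base.Q := Qmake 1 2.
Definition thS : VS := addVS (eS i_t) (sclVS (monS 1 2 q1) (eS i_phi)).
Definition gS : MS :=
  subMS (subMS (subMS (tensS thS thS) (sclMS (monS 0 2 q1) (tensS (eS i_phi) (eS i_phi))))
               (tensS (eS i_r) (eS i_r))) (tensS (eS i_z) (eS i_z)).
Definition giS : MS := fun i j =>
  match nat_of_ord i, nat_of_ord j with
  | 0, 0 => Mo 0 0 false q1 :: Mo 2 2 false (Qmake (-1) 1) :: nil
  | 0, 1 | 1, 0 => monS 1 0 q1
  | 1, 1 => monS 0 (-2) (Qmake (-1) 1)
  | 2, 2 | 3, 3 => cstS (Qmake (-1) 1)
  | _, _ => zeroS
  end.
Definition dgS (k i j : 'I_4) : L := dpart k (gS i j).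
Definition GamS (k i j : 'I_4) : L :=
  mulS (cstS qh) (sum4 (fun l => mulS (giS k l) (subS (addS (dgS i j l) (dgS j i l)) (dgS l i j)))).
Definition GamT := Eval vm_compute in tab3 GamS.
Definition RopS : TS := fun a b c p =>
  addS (subS (dpart a (get3 GamT p b c)) (dpart b (get3 GamT p a c)))
       (sum4 (fun m => subS (mulS (get3 GamT m b c) (get3 GamT p a m)) (mulS (get3 GamT m a c) (get3 GamT p b m)))).
Definition RopT := Eval vm_compute in tab4 RopS.
Definition RtS : TS := lowerS gS (get4 RopT).
Definition RtT := Eval vm_compute in tab4 RtS.
Definition RicS : MS := fun b c => sum4 (fun a => get4 RopT a b c a).
Definition RicT := Eval vm_compute in tab2 RicS.
Definition SopS : MS := trMS (mulMS giS (get2 RicT)).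
Definition SopT := Eval vm_compute in tab2 SopS.
Definition kappaS : L := trS (mulMS giS (get2 RicT)).
Definition kappaT := Eval vm_compute in cleanS kappaS.
Definition Ric2S : MS := mulMS (mulMS (get2 RicT) giS) (get2 RicT).
Definition Ric2T := Eval vm_compute in tab2 Ric2S.
Definition Ric3S : MS := mulMS (mulMS (mulMS (mulMS (get2 RicT) giS) (get2 RicT)) giS) (get2 RicT).
Definition Ric3T := Eval vm_compute in tab2 Ric3S.
Definition nablaSS (i j k : 'I_4) : L :=
  subS (dpart i (get2 RicT j k))
       (sum4 (fun m => addS (mulS (get3 GamT m i j) (get2 RicT m k)) (mulS (get3 GamT m i k) (get2 RicT j m)))).
Definition CopS : TS := fun a b =>
  subMS (get4 RopT a b) (sclMS (cstS qh)
    (subMS (addMS (wedgeS gS (eS a) (vmulS (eS b) (get2 SopT))) (wedgeS gS (vmulS (eS a) (get2 SopT)) (eS b)))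
           (sclMS (mulS kappaT (cstS (Qmake 1 3))) (wedgeS gS (eS a) (eS b))))).
Definition CopT := Eval vm_compute in tab4 CopS.
Definition WopS : TS := fun a b =>
  subMS (get4 RopT a b) (sclMS (mulS kappaT (cstS (Qmake 1 12))) (wedgeS gS (eS a) (eS b))).
Definition WopT := Eval vm_compute in tab4 WopS.
Definition KopS : TS := fun a b =>
  subMS (get4 RopT a b) (sclMS (cstS qh)
    (addMS (wedgeS gS (eS a) (vmulS (eS b) (get2 SopT))) (wedgeS gS (vmulS (eS a) (get2 SopT)) (eS b)))).
Definition KopT := Eval vm_compute in tab4 KopS.
Definition CtT := Eval vm_compute in tab4 (lowerS gS (get4 CopT)).
Definition WtT := Eval vm_compute in tab4 (lowerS gS (get4 WopT)).
Definition KtT := Eval vm_compute in tab4 (lowerS gS (get4 KopT)).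

Definition chk_cyc := allI (fun i => allI (fun j => allI (fun k =>
  iszero (addS (addS (nablaSS i j k) (nablaSS j k i)) (nablaSS k i j))))).
Definition chk_ginv := allI (fun i => allI (fun j => iszero (subS (mulMS gS giS i j) (eS j i)))).
Definition chk_RR := allI (fun a => allI (fun b => allI (fun i => allI (fun j => allI (fun k => allI (fun l =>
  iszero (subS (dotS (get4 RopT a b) (get4 RtT) i j k l) (dotS (wedgeS (get2 RicT) (eS a) (eS b)) (get4 RtT) i j k l)))))))).
Definition LCS : L := monS 2 0 (Qmake 2 3).
Definition chk_CC := allI (fun a => allI (fun b => allI (fun i => allI (fun j => allI (fun k => allI (fun l =>
  iszero (subS (dotS (get4 CopT a b) (get4 CtT) i j k l) (mulS LCS (dotS (wedgeS gS (eS a) (eS b)) (get4 CtT) i j k l))))))))).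
Definition chk_compat T := allI (fun i => allI (fun a => allI (fun j => allI (fun k =>
  iszero (compatS (get4 T) (get2 SopT) i a j k))))).
Definition L1S : L := monS 2 0 qh.
Definition L3S : L := monS (-2) 0 (Qmake (-1) 4).
Definition roterS : TS := fun i j k l =>
  addS (mulS L1S (KNS gS gS i j k l))
  (addS (mulS zeroS (KNS gS (get2 RicT) i j k l))
  (addS (mulS L3S (KNS (get2 RicT) (get2 RicT) i j k l))
  (addS (mulS L3S (KNS gS (get2 Ric2T) i j k l))
  (addS (mulS zeroS (KNS (get2 RicT) (get2 Ric2T) i j k l))
        (mulS zeroS (KNS (get2 Ric2T) (get2 Ric2T) i j k l)))))).
Definition chk_roter := allI (fun i => allI (fun j => allI (fun k => allI (fun l =>
  iszero (subS (get4 RtT i j k l) (roterS i j k l)))))).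
Definition A4S : L := monS 4 0 (Qmake (-4) 1).
Definition chk_ein := allI (fun i => allI (fun j => iszero
  (addS (addS (addS (get2 Ric3T i j) (mulS zeroS (get2 Ric2T i j))) (mulS A4S (get2 RicT i j))) (mulS zeroS (gS i j))))).


Lemma ordP (P : 'I_4 -> Prop) : P i_t -> P i_phi -> P i_r -> P i_z -> forall i, P i.
Proof.
move=> h0 h1 h2 h3 [[|[|[|[|n]]]] Hi] //.
- by have -> : Ordinal Hi = i_t by apply: val_inj.
- by have -> : Ordinal Hi = i_phi by apply: val_inj.
- by have -> : Ordinal Hi = i_r by apply: val_inj.
- by have -> : Ordinal Hi = i_z by apply: val_inj.
Qed.

Lemma allIP (f : 'I_4 -> bool) : allI f -> forall i, f i.
Proof. by case/and4P => h0 h1 h2 h3; apply: ordP. Qed.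

Lemma nth_ords (i : 'I_4) : nth i_t ords i = i.
Proof. by elim/ordP: i. Qed.

Lemma get2_tab (f : MS) i j : get2 (tab2 f) i j = cleanS (f i j).
Proof.
rewrite /get2 /tab2 (nth_map i_t) ?size_map ?ltn_ord // (nth_map i_t) ?ltn_ord //.
by rewrite !nth_ords.
Qed.
Lemma get3_tab (f : 'I_4 -> MS) i j k : get3 (tab3 f) i j k = cleanS (f i j k).
Proof.
rewrite /get3 /tab3 (nth_map i_t) ?ltn_ord // nth_ords.
exact: get2_tab.
Qed.
Lemma get4_tab (f : TS) i j k l : get4 (tab4 f) i j k l = cleanS (f i j k l).
Proof.
rewrite /get4 /tab4 (nth_map i_t) ?ltn_ord // nth_ords.
exact: get3_tab.
Qed.

Section Ops.
Variables (R : realType) (a r : R).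
Hypotheses (ha : a != 0) (hr : r != 0).
Local Notation ev := (ev a r).
Let ev_mul := ev_mul ha hr.

Lemma ev_clean p : ev (cleanS p) = ev p.
Proof.
rewrite /cleanS -[ev p]addr0 -(ev_nil a r) -ev_add.
elim: (addS p nil) => [|[a1 r1 s1 c1] q IH] //=.
case: ifP => h /=; first by rewrite IH.
by rewrite IH evQ0 ?(negbFE h) // !mul0r add0r.
Qed.

Definition Mrel (A : 'M[R]_4) (As : MS) := forall i j, A i j = ev (As i j).
Definition Vrel (u : 'rV[R]_4) (us : VS) := forall j, u 0 j = ev (us j).
Definition Trel (T : T4 R) (Ts : TS) := forall i j k l, T i j k l = ev (Ts i j k l).

Lemma big4 (F : 'I_4 -> R) : \sum_(m < 4) F m = F i_t + F i_phi + F i_r + F i_z.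
Proof.
rewrite !big_ord_recl big_ord0 addr0 !addrA.
by congr (_ + _ + _ + _); congr F; apply: val_inj.
Qed.

Lemma sum_rel (F : 'I_4 -> R) Fs : (forall m, F m = ev (Fs m)) ->
  \sum_(m < 4) F m = ev (sum4 Fs).
Proof. by move=> h; rewrite big4 /sum4 !ev_add !h !addrA. Qed.

Lemma Mrel_mul A B As Bs : Mrel A As -> Mrel B Bs -> Mrel (A *m B) (mulMS As Bs).
Proof. move=> hA hB i j; rewrite mxE; apply: sum_rel => k /=; by rewrite ev_mul hA hB. Qed.
Lemma Vrel_vmul u A us As : Vrel u us -> Mrel A As -> Vrel (u *m A) (vmulS us As).
Proof. move=> hu hA j; rewrite mxE; apply: sum_rel => k /=; by rewrite ev_mul hu hA. Qed.
Lemma Mrel_tr A As : Mrel A As -> Mrel A^T (trMS As).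
Proof. by move=> hA i j; rewrite mxE hA. Qed.
Lemma Mrel_add A B As Bs : Mrel A As -> Mrel B Bs -> Mrel (A + B) (addMS As Bs).
Proof. by move=> hA hB i j; rewrite mxE ev_add hA hB. Qed.
Lemma Mrel_sub A B As Bs : Mrel A As -> Mrel B Bs -> Mrel (A - B) (subMS As Bs).
Proof. by move=> hA hB i j; rewrite !mxE ev_sub hA hB. Qed.
Lemma Mrel_scl c A cs As : c = ev cs -> Mrel A As -> Mrel (c *: A) (sclMS cs As).
Proof. by move=> hc hA i j; rewrite mxE ev_mul hA hc. Qed.
Lemma Vrel_add u v us vs : Vrel u us -> Vrel v vs -> Vrel (u + v) (addVS us vs).
Proof. by move=> hu hv j; rewrite mxE ev_add hu hv. Qed.
Lemma Vrel_scl c u cs us : c = ev cs -> Vrel u us -> Vrel (c *: u) (sclVS cs us).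
Proof. by move=> hc hu j; rewrite mxE ev_mul hu hc. Qed.
Lemma Vrel_e i : Vrel (ecoord R i) (eS i).
Proof.
move=> j; rewrite /ecoord /eS mxE eqxx /=.
by case: (j == i); rewrite ?ev_one ?ev_zero.
Qed.
Lemma Mrel_wedge A u v As us vs : Mrel A As -> Vrel u us -> Vrel v vs ->
  Mrel (wedgeE A u v) (wedgeS As us vs).
Proof.
move=> hA hu hv c m; rewrite mxE ev_sub !ev_mul.
by rewrite (Vrel_vmul hv hA) (Vrel_vmul hu hA) hu hv.
Qed.
Lemma Mrel_tens P Q Ps Qs : Vrel P Ps -> Vrel Q Qs -> Mrel (tens P Q) (tensS Ps Qs).
Proof.
move=> hP hQ i j; rewrite mxE big_ord1 !mxE ev_mul -hP -hQ.
by [].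
Qed.
Lemma Trel_dot H T Hs Ts : Mrel H Hs -> Trel T Ts -> Trel (dotT H T) (dotS Hs Ts).
Proof.
move=> hH hT i j k l; rewrite /dotT /dotS ev_neg; congr (- _).
by apply: sum_rel => m /=; rewrite !ev_add !ev_mul !hH !hT.
Qed.
Lemma Trel_KN A E As Es : Mrel A As -> Mrel E Es -> Trel (KN A E) (KNS As Es).
Proof. by move=> hA hE i j k l; rewrite /KN /KNS !ev_sub !ev_add !ev_mul !hA !hE. Qed.
Lemma Trel_lower (G : pt R -> 'M[R]_4) x (H : 'I_4 -> 'I_4 -> 'M[R]_4) Gs Hs :
  Mrel (G x) Gs -> Trel (fun i j k l => H i j k l) Hs -> Trel (lower G x H) (lowerS Gs Hs).
Proof.
move=> hG hH i j k l; rewrite /lower /lowerS; apply: sum_rel => m /=.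
by rewrite ev_mul -hG -(hH i j k m).
Qed.
Lemma compat_rel T E Ts Es : Trel T Ts -> Mrel E Es ->
  (forall i a j k, iszero (compatS Ts Es i a j k)) -> compatible T E.
Proof.
move=> hT hE hz i a' j k; transitivity (ev (compatS Ts Es i a' j k)).
  by apply: sum_rel => p /=; rewrite !ev_add !ev_mul !hT !hE.
exact: (@iszeroP R a r _ (hz i a' j k)).
Qed.
Lemma tr_rel A As : Mrel A As -> \tr A = ev (trS As).
Proof. by move=> hA; rewrite /mxtrace; apply: sum_rel => i; rewrite hA. Qed.
Lemma Mrel_tab2 A S : Mrel A S -> Mrel A (get2 (tab2 S)).
Proof. by move=> h i j; rewrite get2_tab ev_clean h. Qed.
Lemma Trel_tab4 T S : Trel T S -> Trel T (get4 (tab4 S)).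
Proof. by move=> h i j k l; rewrite get4_tab ev_clean h. Qed.
Lemma Orel_tab4 (H : 'I_4 -> 'I_4 -> 'M[R]_4) (S : TS) :
  (forall a' b, Mrel (H a' b) (S a' b)) -> forall a' b, Mrel (H a' b) (get4 (tab4 S) a' b).
Proof. by move=> h a' b i j; rewrite get4_tab ev_clean h. Qed.
End Ops.


Ltac rel := repeat first [ assumption
  | apply: Mrel_sub | apply: Mrel_add | apply: Mrel_mul | apply: Mrel_tr
  | apply: Mrel_scl | apply: Mrel_wedge | apply: Mrel_tens
  | apply: Vrel_add | apply: Vrel_scl | apply: Vrel_vmul | apply: Vrel_e ].

Section Geo.
Variables (R : realType) (a : R).
Hypothesis ha : a != 0.
Local Notation g := (SR_metric a).

Lemma evQ_1 : evQ R q1 = 1. Proof. by rewrite /evQ /= /Z2R /= divr1. Qed.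
Lemma evQ_h : evQ R qh = 2^-1. Proof. by rewrite /evQ /= /Z2R /= mul1r. Qed.

Lemma G_rel (y : pt R) : y 0 i_r != 0 -> Mrel a (y 0 i_r) (g y) gS.
Proof.
move=> hy; rewrite /SR_metric /gS /thS; rel.
all: rewrite /= evQ_1 mul1r mulr1 addr0.
all: try by [].
all: by rewrite -[a ^ _]/(a ^+ 0) expr0 mul1r.
Qed.

Lemma chk_ginv_ok : chk_ginv. Proof. vm_compute. reflexivity. Qed.

Lemma ginv_rel (y : pt R) : y 0 i_r != 0 -> Mrel a (y 0 i_r) (ginv g y) giS.
Proof.
move=> hy.
set Gi := \matrix_(i, j) ev a (y 0 i_r) (giS i j).
have hGi : Mrel a (y 0 i_r) Gi giS by move=> i j; rewrite mxE.
have hm : Mrel a (y 0 i_r) (g y *m Gi) (mulMS gS giS) := Mrel_mul ha hy (G_rel hy) hGi.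
have h1 : g y *m Gi = 1%:M.
  apply/matrixP => i j; rewrite hm.
  have hz := allIP (allIP chk_ginv_ok i) j.
  rewrite (iszero_eq a (y 0 i_r) hz) /eS !mxE.
  by case: (i == j); rewrite ?ev_one ?ev_zero.
have [hu _] := mulmx1_unit h1.
have -> : ginv g y = Gi by rewrite /ginv -[invmx _]mulmx1 -h1 mulmxA mulVmx // mul1mx.
exact: hGi.
Qed.

Lemma dg_rel (y : pt R) : y 0 i_r != 0 -> forall k i j, dg g k i j y = ev a (y 0 i_r) (dgS k i j).
Proof.
move=> hy k i j.
have hf : forall z : pt R, z 0 i_r != 0 -> g z i j = ev a (z 0 i_r) (gS i j).
  by move=> z hz; rewrite (G_rel hz).
by case: (partial_ev hy hf k).
Qed.

Lemma Gam_rel0 (y : pt R) : y 0 i_r != 0 -> forall k i j, Gam g y k i j = ev a (y 0 i_r) (GamS k i j).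
Proof.
move=> hy k i j; rewrite /Gam /GamS (ev_mul ha hy) ev_cst evQ_h; congr (_ * _).
apply: sum_rel => l /=.
by rewrite (ev_mul ha hy) ev_sub ev_add !(dg_rel hy) (ginv_rel hy).
Qed.

Lemma GamT_eq : GamT = tab3 GamS. Proof. vm_compute. reflexivity. Qed.
Lemma RopT_eq : RopT = tab4 RopS. Proof. vm_compute. reflexivity. Qed.
Lemma RtT_eq : RtT = tab4 RtS. Proof. vm_compute. reflexivity. Qed.
Lemma RicT_eq : RicT = tab2 RicS. Proof. vm_compute. reflexivity. Qed.
Lemma SopT_eq : SopT = tab2 SopS. Proof. vm_compute. reflexivity. Qed.
Lemma kappaT_eq : kappaT = cleanS kappaS. Proof. vm_compute. reflexivity. Qed.
Lemma Ric2T_eq : Ric2T = tab2 Ric2S. Proof. vm_compute. reflexivity. Qed.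
Lemma Ric3T_eq : Ric3T = tab2 Ric3S. Proof. vm_compute. reflexivity. Qed.
Lemma CopT_eq : CopT = tab4 CopS. Proof. vm_compute. reflexivity. Qed.
Lemma WopT_eq : WopT = tab4 WopS. Proof. vm_compute. reflexivity. Qed.
Lemma KopT_eq : KopT = tab4 KopS. Proof. vm_compute. reflexivity. Qed.
Lemma CtT_eq : CtT = tab4 (lowerS gS (get4 CopT)). Proof. vm_compute. reflexivity. Qed.
Lemma WtT_eq : WtT = tab4 (lowerS gS (get4 WopT)). Proof. vm_compute. reflexivity. Qed.
Lemma KtT_eq : KtT = tab4 (lowerS gS (get4 KopT)). Proof. vm_compute. reflexivity. Qed.

Lemma Gam_rel (y : pt R) : y 0 i_r != 0 -> forall k i j, Gam g y k i j = ev a (y 0 i_r) (get3 GamT k i j).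
Proof. by move=> hy k i j; rewrite GamT_eq get3_tab ev_clean (Gam_rel0 hy). Qed.

Lemma Rop_rel (y : pt R) : y 0 i_r != 0 -> forall a' b, Mrel a (y 0 i_r) (Rop g y a' b) (get4 RopT a' b).
Proof.
move=> hy; rewrite RopT_eq; apply: Orel_tab4 => a' b c p.
rewrite /Rop mxE /RopS ev_add ev_sub /dpart.
have hf : forall pp bb cc (z : pt R), z 0 i_r != 0 -> Gam g z pp bb cc = ev a (z 0 i_r) (get3 GamT pp bb cc).
  by move=> pp bb cc z hz; rewrite (Gam_rel hz).
case: (partial_ev hy (hf p b c) a') => -> _.
case: (partial_ev hy (hf p a' c) b) => -> _.
congr (_ - _ + _); apply: sum_rel => m /=.
by rewrite ev_sub !(ev_mul ha hy) !(Gam_rel hy).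
Qed.

Lemma Rt_rel (y : pt R) : y 0 i_r != 0 -> Trel a (y 0 i_r) (Rt g y) (get4 RtT).
Proof.
move=> hy; rewrite RtT_eq; apply: Trel_tab4; rewrite /Rt /RtS.
apply: (Trel_lower ha hy (G_rel hy)) => i j k l; exact: (Rop_rel hy).
Qed.

Lemma Ric_rel (y : pt R) : y 0 i_r != 0 -> Mrel a (y 0 i_r) (Ric g y) (get2 RicT).
Proof.
move=> hy; rewrite RicT_eq; apply: Mrel_tab2 => b c.
rewrite /Ric mxE /RicS; apply: sum_rel => a' /=; exact: (Rop_rel hy).
Qed.

Lemma Sop_rel (y : pt R) : y 0 i_r != 0 -> Mrel a (y 0 i_r) (Sop g y) (get2 SopT).
Proof.
move=> hy; rewrite SopT_eq; apply: Mrel_tab2; rewrite /Sop /SopS.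
exact: (Mrel_tr (Mrel_mul ha hy (ginv_rel hy) (Ric_rel hy))).
Qed.

Lemma kappa_rel (y : pt R) : y 0 i_r != 0 -> kappa g y = ev a (y 0 i_r) kappaT.
Proof.
move=> hy; rewrite kappaT_eq ev_clean /kappa /kappaS.
exact: (tr_rel (Mrel_mul ha hy (ginv_rel hy) (Ric_rel hy))).
Qed.

Lemma Ric2_rel (y : pt R) : y 0 i_r != 0 -> Mrel a (y 0 i_r) (Ric2 g y) (get2 Ric2T).
Proof.
move=> hy; rewrite Ric2T_eq; apply: Mrel_tab2; rewrite /Ric2 /Ric2S.
have := ginv_rel hy; have := Ric_rel hy; move=> h1 h2; rel.
Qed.

Lemma Ric3_rel (y : pt R) : y 0 i_r != 0 -> Mrel a (y 0 i_r) (Ric3 g y) (get2 Ric3T).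
Proof.
move=> hy; rewrite Ric3T_eq; apply: Mrel_tab2; rewrite /Ric3 /Ric3S.
have := ginv_rel hy; have := Ric_rel hy; move=> h1 h2; rel.
Qed.

Lemma nablaS_rel (y : pt R) : y 0 i_r != 0 -> forall i j k, nablaS g y i j k = ev a (y 0 i_r) (nablaSS i j k).
Proof.
move=> hy i j k; rewrite /nablaS /nablaSS ev_sub /dpart.
have hf : forall jj kk (z : pt R), z 0 i_r != 0 -> Ric g z jj kk = ev a (z 0 i_r) (get2 RicT jj kk).
  by move=> jj kk z hz; rewrite (Ric_rel hz).
case: (partial_ev hy (hf j k) i) => -> _.
congr (_ - _); apply: sum_rel => m /=.
by rewrite ev_add !(ev_mul ha hy) !(Gam_rel hy) !(Ric_rel hy).
Qed.

Lemma nR2 : (nR R - 2)^-1 = ev a 1 (cstS qh).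
Proof. by rewrite ev_cst evQ_h /nR; congr (_^-1); lra. Qed.
Lemma evQ_3 : evQ R (QArith_base.Qmake 1 3) = 3^-1. Proof. by rewrite /evQ /= /Z2R /= mul1r. Qed.
Lemma evQ_12 : evQ R (QArith_base.Qmake 1 12) = 12^-1. Proof. by rewrite /evQ /= /Z2R /= mul1r. Qed.

Lemma Cop_rel (y : pt R) : y 0 i_r != 0 -> forall a' b, Mrel a (y 0 i_r) (Cop g y a' b) (get4 CopT a' b).
Proof.
move=> hy; rewrite CopT_eq; apply: Orel_tab4 => a' b.
have hG := G_rel hy; have hS := Sop_rel hy; have hR := Rop_rel hy a' b.
rewrite /Cop /CopS; rel.
all: try (by rewrite ev_cst evQ_h /nR; congr (_^-1); lra).
by rewrite (ev_mul ha hy) ev_cst evQ_3 -(kappa_rel hy) /nR; congr (_ * _^-1); lra.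
Qed.

Lemma Wop_rel (y : pt R) : y 0 i_r != 0 -> forall a' b, Mrel a (y 0 i_r) (Wop g y a' b) (get4 WopT a' b).
Proof.
move=> hy; rewrite WopT_eq; apply: Orel_tab4 => a' b.
have hG := G_rel hy; have hR := Rop_rel hy a' b.
rewrite /Wop /WopS; rel.
by rewrite (ev_mul ha hy) ev_cst evQ_12 -(kappa_rel hy) /nR; congr (_ * _^-1); lra.
Qed.

Lemma Kop_rel (y : pt R) : y 0 i_r != 0 -> forall a' b, Mrel a (y 0 i_r) (Kop g y a' b) (get4 KopT a' b).
Proof.
move=> hy; rewrite KopT_eq; apply: Orel_tab4 => a' b.
have hG := G_rel hy; have hS := Sop_rel hy; have hR := Rop_rel hy a' b.
rewrite /Kop /KopS; rel.
by rewrite ev_cst evQ_h /nR; congr (_^-1); lra.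
Qed.

Lemma Ct_rel (y : pt R) : y 0 i_r != 0 -> Trel a (y 0 i_r) (Ct g y) (get4 CtT).
Proof.
move=> hy; rewrite CtT_eq; apply: Trel_tab4; rewrite /Ct.
apply: (Trel_lower ha hy (G_rel hy)) => i j k l; exact: (Cop_rel hy).
Qed.
Lemma Wt_rel (y : pt R) : y 0 i_r != 0 -> Trel a (y 0 i_r) (Wt g y) (get4 WtT).
Proof.
move=> hy; rewrite WtT_eq; apply: Trel_tab4; rewrite /Wt.
apply: (Trel_lower ha hy (G_rel hy)) => i j k l; exact: (Wop_rel hy).
Qed.
Lemma Kt_rel (y : pt R) : y 0 i_r != 0 -> Trel a (y 0 i_r) (Kt g y) (get4 KtT).
Proof.
move=> hy; rewrite KtT_eq; apply: Trel_tab4; rewrite /Kt.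
apply: (Trel_lower ha hy (G_rel hy)) => i j k l; exact: (Kop_rel hy).
Qed.
End Geo.


Definition alphaS : L := monS 2 0 (Qmake (-2) 1).
Definition sharpS (u : VS) : VS := vmulS u (trMS giS).
Definition gprodS (u v : VS) : L := sum4 (fun k => mulS (vmulS u gS k) (v k)).
Definition all2I (f : 'I_4 -> 'I_4 -> bool) := allI (fun i => allI (f i)).
Definition eqMS (A B : MS) := all2I (fun i j => iszero (subS (A i j) (B i j))).

Definition CPi : VS := addVS (sclVS s2S thS) (eS i_z).
Definition CPhi : VS := addVS thS (sclVS s2S (eS i_z)).
Definition CbS : L := monS 2 0 (Qmake 6 1).
Definition CgS : L := mulS (monS 2 0 (Qmake (-2) 1)) s2S.
Definition chk_chaki := eqMS (get2 RicT)
  (addMS (addMS (sclMS alphaS gS) (sclMS CbS (tensS CPi CPi))) (sclMS CgS (addMS (tensS CPi CPhi) (tensS CPhi CPi))))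
  && iszero (gprodS (sharpS CPi) (sharpS CPhi)).
Definition DbS : L := monS 2 0 (Qmake 4 1).
Definition chk_deghosh := eqMS (get2 RicT)
  (addMS (addMS (sclMS alphaS gS) (sclMS DbS (tensS thS thS))) (sclMS alphaS (tensS (eS i_z) (eS i_z))))
  && iszero (gprodS (sharpS thS) (sharpS (eS i_z))).
Definition PaS : L := monS 2 0 (Qmake (-4) 3).
Definition PbS : L := monS 2 0 (Qmake 10 3).
Definition ES : MS := subMS (subMS (get2 RicT) (sclMS PaS gS)) (sclMS PbS (tensS thS thS)).
Definition ET := Eval vm_compute in tab2 ES.
Definition chk_pseudo := [&& eqMS (get2 RicT)
  (addMS (addMS (sclMS PaS gS) (sclMS PbS (tensS thS thS))) (sclMS oneS (get2 ET))),
  eqMS (trMS (get2 ET)) (get2 ET),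
  iszero (trS (mulMS giS (get2 ET))) &
  allI (fun i => iszero (sum4 (fun k => mulS (get2 ET i k) (sharpS thS k))))].
Definition NS : MS := subMS (get2 RicT) (sclMS alphaS gS).
Definition NS' : MS := fun i k =>
  addS (mulS (thS i) (mulS DbS (thS k))) (mulS (eS i_z i) (mulS alphaS (eS i_z k))).
Definition o0 : 'I_2 := @Ordinal 2 0 isT.
Definition o1 : 'I_2 := @Ordinal 2 1 isT.
Definition sel (i : 'I_2) : 'I_4 := if nat_of_ord i == 0%N then i_t else i_z.
Definition cS (i : 'I_2) : L := if nat_of_ord i == 0%N then monS (-2) 0 (Qmake 1 4) else monS (-2) 0 (Qmake (-1) 2).
Definition allI2 (f : 'I_2 -> bool) := f o0 && f o1.
Definition chk_rank := eqMS NS NS' && allI2 (fun i => allI2 (fun i' =>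
  iszero (subS (mulS (cS i) (NS (sel i) (sel i'))) (if i == i' then oneS else zeroS)))).

Lemma chk_cyc_ok : chk_cyc. Proof. vm_compute. reflexivity. Qed.
Lemma chk_RR_ok : chk_RR. Proof. vm_compute. reflexivity. Qed.
Lemma chk_CC_ok : chk_CC. Proof. vm_compute. reflexivity. Qed.
Lemma chk_compat_ok : [&& chk_compat RtT, chk_compat CtT, chk_compat WtT & chk_compat KtT].
Proof. vm_compute. reflexivity. Qed.
Lemma chk_roter_ok : chk_roter. Proof. vm_compute. reflexivity. Qed.
Lemma chk_ein_ok : chk_ein. Proof. vm_compute. reflexivity. Qed.
Lemma chk_chaki_ok : chk_chaki. Proof. vm_compute. reflexivity. Qed.
Lemma chk_deghosh_ok : chk_deghosh. Proof. vm_compute. reflexivity. Qed.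
Lemma chk_pseudo_ok : chk_pseudo. Proof. vm_compute. reflexivity. Qed.
Lemma chk_rank_ok : chk_rank. Proof. vm_compute. reflexivity. Qed.
Lemma ET_eq : ET = tab2 ES. Proof. vm_compute. reflexivity. Qed.

Section Main.
Variables (R : realType) (a : R).
Hypothesis ha : a != 0.
Local Notation g := (SR_metric a).
Local Notation M := (@SR_M R).

Lemma M_ne0 (x : pt R) : M x -> x 0 i_r != 0.
Proof. by move=> hx; rewrite gt_eqF. Qed.

Lemma U_M (x : pt R) : Uset g M x -> M x.
Proof. by case. Qed.

Lemma smooth_mono (A B : set (pt R)) f : smooth_on A f -> (forall x, B x -> A x) -> smooth_on B f.
Proof. by move=> h hBA ds x /hBA; apply: h. Qed.

Lemma smU f p : (forall z : pt R, f z = ev a (z 0 i_r) p) -> smooth_on (Uset g M) f.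
Proof. move=> h; apply: (smooth_mono (@smooth_ev R a f p (fun z _ => h z))); exact: U_M. Qed.

Lemma smM p : smooth_on M (fun z : pt R => ev a (z 0 i_r) p).
Proof. exact: (@smooth_ev R a _ p (fun z _ => erefl)). Qed.

Lemma eqMSP (A B : MS) r : eqMS A B -> forall i j, ev a r (A i j) = ev a r (B i j).
Proof. by move=> h i j; apply: iszero_eq; exact: (allIP (allIP h i) j). Qed.

Definition vecE (P : VS) : pt R -> 'rV[R]_4 := fun y => \row_j ev a (y 0 i_r) (P j).
Lemma vecE_rel P (y : pt R) : Vrel a (y 0 i_r) (vecE P y) P.
Proof. by move=> j; rewrite mxE. Qed.

Lemma gprod_rel (y : pt R) (hy : y 0 i_r != 0) u v us vs :
  Vrel a (y 0 i_r) u us -> Vrel a (y 0 i_r) v vs -> gprod g y u v = ev a (y 0 i_r) (gprodS us vs).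
Proof.
move=> hu hv; rewrite /gprod mxE; apply: sum_rel => k /=.
by rewrite (ev_mul ha hy) -(Vrel_vmul ha hy hu (G_rel ha hy) k) -hv !mxE.
Qed.

Lemma sharp_rel (y : pt R) (hy : y 0 i_r != 0) u us :
  Vrel a (y 0 i_r) u us -> Vrel a (y 0 i_r) (sharp g y u) (sharpS us).
Proof. move=> hu; exact: (Vrel_vmul ha hy hu (Mrel_tr (ginv_rel ha hy))). Qed.

Lemma sum_delta (F : 'I_4 -> R) s : \sum_(j < 4) (j == s)%:R * F j = F s.
Proof.
rewrite big4; elim/ordP: s => /=; rewrite ?mul1r ?mul0r ?add0r ?addr0 //.
Qed.
Lemma sum_delta' (F : 'I_4 -> R) s : \sum_(j < 4) F j * (j == s)%:R = F s.
Proof. rewrite -[RHS]sum_delta; apply: eq_bigr => j _; exact: mulrC. Qed.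

Lemma allI2P (f : 'I_2 -> bool) : allI2 f -> forall i, f i.
Proof.
case/andP => h0 h1 [[|[|n]] Hi] //.
- by have -> : Ordinal Hi = o0 by apply: val_inj.
- by have -> : Ordinal Hi = o1 by apply: val_inj.
Qed.

Lemma rank2 (x : pt R) (hy : x 0 i_r != 0) :
  \rank (Ric g x - ev a (x 0 i_r) alphaS *: g x) = 2%N.
Proof.
set r := x 0 i_r.
set N := Ric g x - _ *: g x.
have hG := G_rel ha hy; have hRc := Ric_rel ha hy.
have hN : Mrel a r N NS by rewrite /N /NS; rel.
have [h1 h2] := andP chk_rank_ok.
apply/eqP; rewrite eqn_leq; apply/andP; split.
  pose B : 'M[R]_(4, 2) := \matrix_(i, j) (if nat_of_ord j == 0%N then ev a r (thS i) else ev a r (eS i_z i)).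
  pose C : 'M[R]_(2, 4) := \matrix_(j, k) (if nat_of_ord j == 0%N then ev a r (mulS DbS (thS k))
                                          else ev a r (mulS alphaS (eS i_z k))).
  have -> : N = B *m C.
    apply/matrixP => i k; rewrite hN (eqMSP r h1) /NS' mxE big_ord_recr big_ord1 /= !mxE /=.
    by rewrite ev_add !(ev_mul ha hy).
  exact: mulmx_max_rank.
pose P : 'M[R]_(2, 4) := \matrix_(i, j) ((j == sel i)%:R * ev a r (cS i)).
pose Q : 'M[R]_(4, 2) := \matrix_(k, i) (k == sel i)%:R.
apply: (@mulmx1_min_rank _ 2 4 4 N P Q).
apply/matrixP => i i'; rewrite mxE.
under eq_bigr => k _ do rewrite [Q _ _]mxE.
rewrite sum_delta' mxE.
under eq_bigr => j _ do rewrite [P _ _]mxE -mulrA.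
rewrite sum_delta hN -(ev_mul ha hy).
have := allI2P (allI2P h2 i) i' => /(iszero_eq a r) ->.
rewrite !mxE; case: (i == i'); by rewrite ?ev_one ?ev_zero.
Qed.
End Main.

Theorem mainTheorem1 (R : realType) (a : R) (ha : a != 0) :
  let g := SR_metric a in
  let M := @SR_M R in
  [/\ (* (i) *) Ricci_cyclic_parallel g M,
      (* (ii), (iii) *) k_quasi_Einstein g M 2 /\ Ein3 g M,
      (* (iv), (v) *) [/\ gen_quasi_Einstein_Chaki g M,
                         gen_quasi_Einstein_DeGhosh g M &
                         pseudo_quasi_Einstein g M],
      (* (vi), (vii), (viii) *) [/\ special_Ricci_gen_pseudosymmetric g M,
                                   Weyl_pseudosymmetric g M &
                                   gen_Roter_type g M] &
      (* (ix) *)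
      [/\ Ricci_Riemann_compatible g M, Ricci_Weyl_compatible g M,
          Ricci_concircular_compatible g M & Ricci_conharmonic_compatible g M]].
Proof.
move=> g M; rewrite /g /M.
have hM := @M_ne0 R.
split.
-
  move=> x /hM hy i j k; rewrite !(nablaS_rel ha hy) -ev_add -ev_add.
  exact: (@iszeroP R a (x 0 i_r) _ (allIP (allIP (allIP chk_cyc_ok i) j) k)).
- split.
  + exists (fun y : pt R => ev a (y 0 i_r) alphaS); split; first exact: smM.
    by move=> x /hM hy; exact: rank2.
  + exists (fun y : pt R => ev a (y 0 i_r) zeroS), (fun y : pt R => ev a (y 0 i_r) A4S),
      (fun y : pt R => ev a (y 0 i_r) zeroS).
    split; try exact: smM.
    move=> x /hM hy; apply/matrixP => i j.
    have hG := G_rel ha hy; have h1 := Ric_rel ha hy; have h2 := Ric2_rel ha hy; have h3 := Ric3_rel ha hy.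
    have h : Mrel a (x 0 i_r) (Ric3 g x + ev a (x 0 i_r) zeroS *: Ric2 g x + ev a (x 0 i_r) A4S *: Ric g x
               + ev a (x 0 i_r) zeroS *: g x)
      (addMS (addMS (addMS (get2 Ric3T) (sclMS zeroS (get2 Ric2T))) (sclMS A4S (get2 RicT))) (sclMS zeroS gS)).
      by rel.
    rewrite h mxE; exact: (@iszeroP R a (x 0 i_r) _ (allIP (allIP chk_ein_ok i) j)).
- split.
  +
    have [hc1 hc2] := andP chk_chaki_ok.
    exists (fun y : pt R => ev a (y 0 i_r) alphaS), (fun y : pt R => ev a (y 0 i_r) CbS),
      (fun y : pt R => ev a (y 0 i_r) CgS), (vecE a CPi), (vecE a CPhi).
    split; try (apply: smU => z; reflexivity).
      by split => i; apply: smU => z; rewrite mxE.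
    move=> x /U_M /hM hy; split.
      rewrite (gprod_rel ha hy (sharp_rel ha hy (vecE_rel a CPi x)) (sharp_rel ha hy (vecE_rel a CPhi x))).
      exact: (@iszeroP R a (x 0 i_r)).
    apply/matrixP => i j.
    have hG := G_rel ha hy; have h1 := Ric_rel ha hy.
    have hP := vecE_rel a CPi x; have hF := vecE_rel a CPhi x.
    have h : Mrel a (x 0 i_r) (ev a (x 0 i_r) alphaS *: g x + ev a (x 0 i_r) CbS *: tens (vecE a CPi x) (vecE a CPi x)
               + ev a (x 0 i_r) CgS *: (tens (vecE a CPi x) (vecE a CPhi x) + tens (vecE a CPhi x) (vecE a CPi x)))
      (addMS (addMS (sclMS alphaS gS) (sclMS CbS (tensS CPi CPi))) (sclMS CgS (addMS (tensS CPi CPhi) (tensS CPhi CPi)))).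
      by rel.
    by rewrite h h1; exact: (eqMSP a (x 0 i_r) hc1 i j).
  +
    have [hc1 hc2] := andP chk_deghosh_ok.
    exists (fun y : pt R => ev a (y 0 i_r) alphaS), (fun y : pt R => ev a (y 0 i_r) DbS),
      (fun y : pt R => ev a (y 0 i_r) alphaS), (vecE a thS), (vecE a (eS i_z)).
    split; try (apply: smU => z; reflexivity).
      by split => i; apply: smU => z; rewrite mxE.
    move=> x /U_M /hM hy; split.
      rewrite (gprod_rel ha hy (sharp_rel ha hy (vecE_rel a thS x)) (sharp_rel ha hy (vecE_rel a (eS i_z) x))).
      exact: (@iszeroP R a (x 0 i_r)).
    apply/matrixP => i j.
    have hG := G_rel ha hy; have h1 := Ric_rel ha hy.
    have hP := vecE_rel a thS x; have hF := vecE_rel a (eS i_z) x.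
    have h : Mrel a (x 0 i_r) (ev a (x 0 i_r) alphaS *: g x + ev a (x 0 i_r) DbS *: tens (vecE a thS x) (vecE a thS x)
               + ev a (x 0 i_r) alphaS *: tens (vecE a (eS i_z) x) (vecE a (eS i_z) x))
      (addMS (addMS (sclMS alphaS gS) (sclMS DbS (tensS thS thS))) (sclMS alphaS (tensS (eS i_z) (eS i_z)))).
      by rel.
    by rewrite h h1; exact: (eqMSP a (x 0 i_r) hc1 i j).
  +
    have /and4P [hc1 hc2 hc3 hc4] := chk_pseudo_ok.
    pose E := fun y : pt R => \matrix_(i, j) ev a (y 0 i_r) (get2 ET i j).
    exists (fun y : pt R => ev a (y 0 i_r) PaS), (fun y : pt R => ev a (y 0 i_r) PbS),
      (fun y : pt R => ev a (y 0 i_r) oneS), (vecE a thS), E.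
    split; try (apply: smU => z; reflexivity).
      split; first by move=> i; apply: smU => z; rewrite mxE.
      by move=> i j; apply: smU => z; rewrite mxE.
    move=> x /U_M /hM hy.
    have hE : Mrel a (x 0 i_r) (E x) (get2 ET) by move=> i j; rewrite mxE.
    have hG := G_rel ha hy; have h1 := Ric_rel ha hy.
    have hP := vecE_rel a thS x.
    split.
    * apply/matrixP => i j; rewrite mxE !hE; exact: (eqMSP a (x 0 i_r) hc2 i j).
    * rewrite (tr_rel (Mrel_mul ha hy (ginv_rel ha hy) hE)); exact: (@iszeroP R a (x 0 i_r)).
    * apply/matrixP => i j; rewrite (ord1 j) !mxE.
      have hs := sharp_rel ha hy hP.
      transitivity (ev a (x 0 i_r) (sum4 (fun k => mulS (get2 ET i k) (sharpS thS k)))).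
        apply: sum_rel => k /=; by rewrite (ev_mul ha hy) -hs !mxE.
      exact: (@iszeroP R a (x 0 i_r) _ (allIP hc4 i)).
    * apply/matrixP => i j.
      have h : Mrel a (x 0 i_r) (ev a (x 0 i_r) PaS *: g x + ev a (x 0 i_r) PbS *: tens (vecE a thS x) (vecE a thS x)
               + ev a (x 0 i_r) oneS *: E x)
        (addMS (addMS (sclMS PaS gS) (sclMS PbS (tensS thS thS))) (sclMS oneS (get2 ET))).
        by rel.
      by rewrite h h1; exact: (eqMSP a (x 0 i_r) hc1 i j).
- split.
  + move=> x /hM hy i j k l a' b.
    rewrite (Trel_dot ha hy (Rop_rel ha hy a' b) (Rt_rel ha hy)).
    rewrite (Trel_dot ha hy (Mrel_wedge ha hy (Ric_rel ha hy) (Vrel_e a (x 0 i_r) a') (Vrel_e a (x 0 i_r) b)) (Rt_rel ha hy)).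
    exact: (iszero_eq a (x 0 i_r) (allIP (allIP (allIP (allIP (allIP (allIP chk_RR_ok a') b) i) j) k) l)).
  + exists (fun y : pt R => ev a (y 0 i_r) LCS); split; first exact: smM.
    move=> x /hM hy i j k l a' b.
    rewrite (Trel_dot ha hy (Cop_rel ha hy a' b) (Ct_rel ha hy)).
    rewrite (Trel_dot ha hy (Mrel_wedge ha hy (G_rel ha hy) (Vrel_e a (x 0 i_r) a') (Vrel_e a (x 0 i_r) b)) (Ct_rel ha hy)).
    rewrite -(ev_mul ha hy).
    exact: (iszero_eq a (x 0 i_r) (allIP (allIP (allIP (allIP (allIP (allIP chk_CC_ok a') b) i) j) k) l)).
  + exists (fun y : pt R => ev a (y 0 i_r) L1S), (fun y : pt R => ev a (y 0 i_r) zeroS),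
      (fun y : pt R => ev a (y 0 i_r) L3S), (fun y : pt R => ev a (y 0 i_r) L3S),
      (fun y : pt R => ev a (y 0 i_r) zeroS), (fun y : pt R => ev a (y 0 i_r) zeroS).
    split; try (split; exact: smM).
    move=> x /hM hy i j k l.
    have hG := G_rel ha hy; have h1 := Ric_rel ha hy; have h2 := Ric2_rel ha hy.
    rewrite (Rt_rel ha hy) (iszero_eq a (x 0 i_r) (allIP (allIP (allIP (allIP chk_roter_ok i) j) k) l)).
    rewrite /roterS.
    rewrite (Trel_KN ha hy hG hG) (Trel_KN ha hy hG h1) (Trel_KN ha hy h1 h1) (Trel_KN ha hy hG h2)
            (Trel_KN ha hy h1 h2) (Trel_KN ha hy h2 h2).
    move: (KNS gS gS i j k l) (KNS gS (get2 RicT) i j k l) (KNS (get2 RicT) (get2 RicT) i j k l)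
      (KNS gS (get2 Ric2T) i j k l) (KNS (get2 RicT) (get2 Ric2T) i j k l)
      (KNS (get2 Ric2T) (get2 Ric2T) i j k l) L1S L3S zeroS => k1 k2 k3 k4 k5 k6 l1 l3 z.
    by rewrite !ev_add !(ev_mul ha hy) !addrA.
- have /and4P [c1 c2 c3 c4] := chk_compat_ok.
  split => x /hM hy; apply: (compat_rel ha hy _ (Sop_rel ha hy)).
  + exact: Rt_rel.
  + by move=> i a' j k; exact: (allIP (allIP (allIP (allIP c1 i) a') j) k).
  + exact: Ct_rel.
  + by move=> i a' j k; exact: (allIP (allIP (allIP (allIP c2 i) a') j) k).
  + exact: Wt_rel.
  + by move=> i a' j k; exact: (allIP (allIP (allIP (allIP c3 i) a') j) k).
  + exact: Kt_rel.
  + by move=> i a' j k; exact: (allIP (allIP (allIP (allIP c4 i) a') j) k).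
Qed.
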